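(* Let $W$ be a neat, upward-restricted layered wheel with rooted tree $T$. Then every class $\mathcal F$ of finite induced subgraphs of $W$ that satisfies the bounded-branch property in $W$ has bounded treewidth (i.e., there is a constant $c$ with $\operatorname{tw}(G')\le c$ for all $G'\in\mathcal F$).
   Context: A layered wheel is a countably infinite graph $W$ on the same vertex set as a countably infinite, locally finite (every node has finite degree) rooted tree $T$ embedded in the plane, such that: (1) for every natural number $n$, the set $L_n$ of nodes at distance $n$ from the root of $T$ (the $n$-th layer) induces in $W$ a finite path which visits the nodes of $L_n$ in the left-to-right order given by the planar embedding of $T$; the edges of $W$ with both endpoints in a common layer are the layer edges, and their set is denoted $E_L$; (2) every edge of $W$ not in $E_L$ joins two nodes one of which is an ancestor of the other in $T$; (3) there is a finite bound on the number of vertices of any path in $T$ consisting only of nodes of degree $2$ in $T$. A node is considered its own ancestor and descendant. $W$ is neat if $T$ has no leaf. $W$ is upward-restricted if there is an integer $t$ such that for every node $v$ of $T$ there is a set $X_v$ of at most $t$ ancestors of $v$ such that, in $W - E_L$, every edge with exactly one endpoint among the descendants of $v$ has its other endpoint in $X_v$. A downward path in $T$ starting at $v$ is a maximal (possibly infinite) path starting at $v$ that iteratively moves from the current node to one of its children as long as the current node is not a leaf. A family $\mathcal F$ of induced subgraphs of $W$ satisfies the bounded-branch property (in $W$) if there is an integer $h$ such that for every $G'\in\mathcal F$ and every $v\in V(T)$ (not necessarily in $V(G')$), there is a downward path in $T$ starting at $v$ containing at most $h$ vertices of $G'$. *)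

(* Defs.v *)
From mathcomp Require Import all_boot.
Set Implicit Arguments.
Unset Strict Implicit.
Unset Printing Implicit Defensive.

(* Rooted plane tree T on the vertex set nat (countably infinite).     *)
(*   parent : parent map (its value at r is irrelevant)                *)
(*   depth  : distance to the root (so L_n = [set v | depth v = n])     *)
(*   pos    : left-to-right rank of a node inside its layer, coming     *)
(*            from the planar embedding                                 *)

Definition child (r : nat) (parent : nat -> nat) (u v : nat) : Prop :=
  u <> r /\ parent u = v.

Definition tadj (r : nat) (parent : nat -> nat) (u v : nat) : Prop :=
  child r parent u v \/ child r parent v u.

Definition ancestor (parent depth : nat -> nat) (u v : nat) : Prop :=
  exists k, k <= depth v /\ iter k parent v = u.

Definition leaf (r : nat) (parent : nat -> nat) (v : nat) : Prop :=
  forall u, ~ child r parent u v.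

Definition deg2 (r : nat) (parent : nat -> nat) (v : nat) : Prop :=
  exists a b, a <> b /\ tadj r parent v a /\ tadj r parent v b /\
    forall c, tadj r parent v c -> c = a \/ c = b.

Definition tpath (r : nat) (parent : nat -> nat) (p : seq nat) : Prop :=
  uniq p /\ forall i, i.+1 < size p -> tadj r parent (nth 0 p i) (nth 0 p i.+1).

Definition rooted_plane_tree (r : nat) (parent depth pos : nat -> nat) : Prop :=
  [/\ depth r = 0,
      (forall v, v <> r -> depth v = (depth (parent v)).+1),
      (forall v, exists l : seq nat, forall u, child r parent u v -> u \in l),
      (forall u v, depth u = depth v -> pos u = pos v -> u = v) &
      (* planarity: the left-to-right order is compatible with parents *)
      (forall u v, u <> r -> v <> r -> depth u = depth v ->
          pos u < pos v -> pos (parent u) <= pos (parent v))].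

Definition layer_consecutive (depth pos : nat -> nat) (u v : nat) : Prop :=
  depth u = depth v /\ u <> v /\
  ~ (exists w, depth w = depth u /\
       ((pos u < pos w < pos v) \/ (pos v < pos w < pos u))).

Definition layered_wheel (r : nat) (parent depth pos : nat -> nat)
    (adjW : nat -> nat -> Prop) : Prop :=
  rooted_plane_tree r parent depth pos /\
  ((forall u v, adjW u v -> adjW v u) /\ (forall v, ~ adjW v v)) /\
  [/\
      (forall u v, depth u = depth v -> (adjW u v <-> layer_consecutive depth pos u v)),
      (forall u v, adjW u v -> depth u <> depth v ->
          ancestor parent depth u v \/ ancestor parent depth v u) &
      (exists h, forall p, tpath r parent p ->
          (forall x, x \in p -> deg2 r parent x) -> size p <= h)].

Definition neat (r : nat) (parent : nat -> nat) : Prop :=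
  forall v, ~ leaf r parent v.

Definition upward_restricted (r : nat) (parent depth : nat -> nat)
    (adjW : nat -> nat -> Prop) : Prop :=
  exists t : nat, forall v, exists X : seq nat,
    [/\ size X <= t,
        (forall x, x \in X -> ancestor parent depth x v) &
        (forall x y, adjW x y -> depth x <> depth y ->
            ancestor parent depth v x -> ~ ancestor parent depth v y ->
            y \in X)].

(* downward path starting at v: p 0 = v, moves to a child while the current
   node is not a leaf; once at a leaf it stays there (encoding a finite
   maximal path); its vertex set is the range of p *)
Definition downward_path (r : nat) (parent : nat -> nat) (v : nat)
    (p : nat -> nat) : Prop :=
  p 0 = v /\
  forall i, (~ leaf r parent (p i) -> child r parent (p i.+1) (p i)) /\
            (leaf r parent (p i) -> p i.+1 = p i).

Definition at_most_on_path (S : seq nat) (p : nat -> nat) (h : nat) : Prop :=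
  forall l : seq nat, uniq l ->
    (forall x, x \in l -> x \in S /\ exists i, p i = x) -> size l <= h.

(* Finite induced subgraphs of W are identified with their (finite) vertex
   sets S : seq nat; F is a class of them. *)
Definition bounded_branch (r : nat) (parent : nat -> nat)
    (F : seq nat -> Prop) : Prop :=
  exists h, forall S, F S -> forall v : nat,
    exists p, downward_path r parent v p /\ at_most_on_path S p h.

(* The decomposition tree has nodes 'I_n.+1, root ord0, and an edge     *)
(* between i and tpar i for every i <> 0 (with tpar i < i).            *)
Definition tree_decomposition (adjW : nat -> nat -> Prop) (S : seq nat)
    (c : nat) : Prop :=
  exists (n : nat) (tpar : 'I_n.+1 -> 'I_n.+1) (B : 'I_n.+1 -> seq nat),
  (forall i : 'I_n.+1, 0 < i -> tpar i < i) /\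
  [/\
      (forall i x, x \in B i -> x \in S),
      (forall i, size (undup (B i)) <= c.+1),
      (forall x, x \in S -> exists i, x \in B i),
      (forall x y, x \in S -> y \in S -> adjW x y ->
          exists i, x \in B i /\ y \in B i) &
      (forall x (i j : 'I_n.+1), x \in B i -> x \in B j ->
          connect [rel a b | [&& x \in B a, x \in B b &
                     ((a != ord0) && (tpar a == b)) || ((b != ord0) && (tpar b == a))]] i j)].

Definition tw_le (adjW : nat -> nat -> Prop) (S : seq nat) (c : nat) : Prop :=
  tree_decomposition adjW S c.

(* Main.v *)
Require Import Defs.
From mathcomp Require Import all_boot fingraph zify.
From Stdlib Require Import ClassicalEpsilon Classical.
Set Implicit Arguments.
Unset Strict Implicit.
Unset Printing Implicit Defensive.
Lemma td_abstract (adjW : nat -> nat -> Prop) (S : seq nat) (c : nat)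
  (A : eqType) (nodes : seq A) (root : A) (par : A -> A) (rk : A -> nat)
  (Bg : A -> seq nat) (mini : nat -> A -> Prop) :
  uniq nodes -> root \in nodes ->
  (forall a, a \in nodes -> a != root -> par a \in nodes /\ rk (par a) < rk a) ->
  (forall a, a \in nodes -> a != root -> rk root < rk a) ->
  (forall a x, a \in nodes -> x \in Bg a -> x \in S) ->
  (forall a, a \in nodes -> size (undup (Bg a)) <= c.+1) ->
  (forall x, x \in S -> exists a, a \in nodes /\ x \in Bg a) ->
  (forall x y, x \in S -> y \in S -> adjW x y ->
      exists a, a \in nodes /\ x \in Bg a /\ y \in Bg a) ->
  (forall x a, a \in nodes -> x \in Bg a -> mini x a \/ (a != root /\ x \in Bg (par a))) ->
  (forall x a b, a \in nodes -> b \in nodes -> mini x a -> mini x b -> a = b) ->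
  tree_decomposition adjW S c.
Proof.
move=> Hu Hr Hpar Hroot HBS HBsz Hcov Hedge Hcl Hmin.
pose leT := fun a b : A => rk a <= rk b.
pose s := sort leT nodes.
have Hms : forall a, (a \in s) = (a \in nodes) by move=> a; rewrite mem_sort.
have Hus : uniq s by rewrite sort_uniq.
have Hss : sorted leT s by apply: sort_sorted => a b; rewrite /leT leq_total.
have Htr : transitive leT by move=> a b d; rewrite /leT; apply: leq_trans.
have Hrf : reflexive leT by move=> a; rewrite /leT.
have Hsz : 0 < size s by rewrite -has_predT; apply/hasP; exists root; rewrite ?Hms.
have Hmono : forall i j, i < size s -> j < size s -> i <= j ->
    rk (nth root s i) <= rk (nth root s j).
  by move=> i j Hi Hj Hij; apply: (@sorted_leq_nth _ leT Htr Hrf root s Hss i j).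
have H0 : nth root s 0 = root.
  apply/eqP; apply/negPn/negP => Hne.
  have Hin : nth root s 0 \in nodes by rewrite -Hms mem_nth.
  have := Hroot _ Hin Hne.
  have Hj : index root s < size s by rewrite index_mem Hms.
  have := Hmono 0 _ Hsz Hj (leq0n _).
  rewrite nth_index ?Hms //. move=> H1 H2. move: (leq_trans H2 H1). by rewrite ltnn.
set n := (size s).-1.
have Hn : size s = n.+1 by rewrite /n prednK.
pose a_ := fun i : 'I_n.+1 => nth root s i.
have Ha_in : forall i : 'I_n.+1, a_ i \in nodes.
  by move=> i; rewrite -Hms mem_nth // Hn.
pose tpar := fun i : 'I_n.+1 => (inord (index (par (a_ i)) s) : 'I_n.+1).
pose B := fun i : 'I_n.+1 => Bg (a_ i).
have Hroot_ne : forall i : 'I_n.+1, 0 < i -> a_ i != root.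
  move=> i Hi; apply/negP => /eqP Heq.
  have : index (a_ i) s = i by rewrite index_uniq // Hn.
  by rewrite Heq -{1}H0 index_uniq // => Hi0; move: Hi; rewrite -Hi0.
have Htpar : forall i : 'I_n.+1, 0 < i ->
    nat_of_ord (tpar i) = index (par (a_ i)) s /\ a_ (tpar i) = par (a_ i) /\ tpar i < i.
  move=> i Hi.
  have [Hpin Hrk] := Hpar _ (Ha_in i) (Hroot_ne i Hi).
  have Hidx : index (par (a_ i)) s < n.+1 by rewrite -Hn index_mem Hms.
  have Ev : nat_of_ord (tpar i) = index (par (a_ i)) s by rewrite /tpar inordK.
  split => //; split; first by rewrite /a_ Ev nth_index // Hms.
  rewrite Ev ltnNge; apply/negP => Hle.
  have Hi1 : i < size s by rewrite Hn.
  have Hi2 : index (par (a_ i)) s < size s by rewrite Hn.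
  have := Hmono i _ Hi1 Hi2 Hle.
  rewrite nth_index ?Hms // => H1.
  by move: (leq_trans Hrk H1); rewrite ltnn.
exists n, tpar, B.
split.
  by move=> i Hi; case: (Htpar i Hi) => _ [].
split.
- by move=> i x; apply: HBS.
- by move=> i; apply: HBsz.
- move=> x Hx; have [a [Ha Hxa]] := Hcov x Hx.
  have Hi : index a s < n.+1 by rewrite -Hn index_mem Hms.
  exists (Ordinal Hi); by rewrite /B /a_ /= nth_index ?Hms.
- move=> x y Hx Hy Hxy; have [a [Ha [Hxa Hya]]] := Hedge x y Hx Hy Hxy.
  have Hi : index a s < n.+1 by rewrite -Hn index_mem Hms.
  exists (Ordinal Hi); by rewrite /B /a_ /= nth_index ?Hms.
move=> x i j Hxi Hxj.
set e := (X in connect X).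
have Hsym : symmetric e.
  move=> a b; rewrite /e /=.
  by case: (x \in B a); case: (x \in B b); rewrite //= orbC.
have Hup : forall k (i : 'I_n.+1), i < k -> x \in B i ->
    exists m : 'I_n.+1, mini x (a_ m) /\ connect e i m.
  elim=> [|k IH] i0 //= Hik Hx0.
  have [Hm|[Hne Hxp]] := Hcl x _ (Ha_in i0) Hx0.
    by exists i0; split.
  have Hi0 : 0 < i0.
    rewrite lt0n; apply/negP => /eqP H00.
    by move: Hne; rewrite /a_ H00 H0 eqxx.
  have [_ [Hat Hlt]] := Htpar i0 Hi0.
  have Hk : tpar i0 < k by apply: leq_trans Hlt _; rewrite -ltnS.
  have Hxt : x \in B (tpar i0) by rewrite /B Hat.
  have [m [Hm Hcm]] := IH (tpar i0) Hk Hxt.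
  exists m; split => //.
  apply: connect_trans Hcm; apply: connect1.
  rewrite /e /= Hx0 /B Hat Hxp /=.
  have -> : (i0 != ord0) by apply/eqP => H00; move: Hi0; rewrite H00.
  by rewrite eqxx.
have [m1 [Hm1 C1]] := Hup i.+1 i (ltnSn _) Hxi.
have [m2 [Hm2 C2]] := Hup j.+1 j (ltnSn _) Hxj.
have Em : m1 = m2.
  have := Hmin x _ _ (Ha_in m1) (Ha_in m2) Hm1 Hm2.
  rewrite /a_ => Heq; apply: val_inj => /=.
  have := congr1 (fun z => index z s) Heq.
  by rewrite !index_uniq // Hn.
rewrite -Em in C2.
apply: connect_trans C1 _.
by rewrite (sym_connect_sym Hsym).
Qed.

Definition optpick (P : nat -> Prop) : option nat :=
  match excluded_middle_informative (exists x, P x) with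
  | left H => Some (proj1_sig (constructive_indefinite_description _ H))
  | right _ => None end.

Lemma optpick_some P x : optpick P = Some x -> P x.
Proof.
rewrite /optpick; case: excluded_middle_informative => // H [<-].
exact: proj2_sig.
Qed.

Lemma optpick_none P : optpick P = None -> forall x, ~ P x.
Proof.
rewrite /optpick; case: excluded_middle_informative => // H _ x Px.
by apply: H; exists x.
Qed.

Definition pb (P : Prop) : bool := if excluded_middle_informative P then true else false.
Lemma pbP (P : Prop) : reflect P (pb P).
Proof. by rewrite /pb; case: excluded_middle_informative => H; constructor. Qed.

Lemma exists_minP (P : nat -> Prop) : (exists k, P k) -> exists k, P k /\ forall j, P j -> k <= j.
Proof.
move=> H.
have H' : exists k, pb (P k) by case: H => k Hk; exists k; apply/pbP.
exists (ex_minn H'); case: ex_minnP => m /pbP Hm Hmin; split => // j /pbP Hj.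
exact: Hmin.
Qed.

Lemma seq_max (f : nat -> nat) (L : seq nat) : L != [::] ->
  exists x, x \in L /\ forall q, q \in L -> f q <= f x.
Proof.
elim: L => // a L IH _.
case: (altP (L =P [::])) => [->|HL].
  by exists a; split; rewrite ?mem_seq1 // => q; rewrite mem_seq1 => /eqP ->.
have [x [Hx Hm]] := IH HL.
case: (leqP (f a) (f x)) => Ha.
  exists x; split; first by rewrite in_cons Hx orbT.
  by move=> q; rewrite in_cons => /orP [/eqP ->|/Hm].
exists a; split; first by rewrite in_cons eqxx.
move=> q; rewrite in_cons => /orP [/eqP ->|/Hm H] //.
exact: leq_trans H (ltnW Ha).
Qed.

Lemma seq_min (f : nat -> nat) (L : seq nat) : L != [::] ->
  exists x, x \in L /\ forall q, q \in L -> f x <= f q.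
Proof.
elim: L => // a L IH _.
case: (altP (L =P [::])) => [->|HL].
  by exists a; split; rewrite ?mem_seq1 // => q; rewrite mem_seq1 => /eqP ->.
have [x [Hx Hm]] := IH HL.
case: (leqP (f x) (f a)) => Ha.
  exists x; split; first by rewrite in_cons Hx orbT.
  by move=> q; rewrite in_cons => /orP [/eqP ->|/Hm].
exists a; split; first by rewrite in_cons eqxx.
move=> q; rewrite in_cons => /orP [/eqP ->|/Hm H] //.
exact: leq_trans (ltnW Ha) H.
Qed.

Lemma fin_max (f : nat -> nat) (L : seq nat) (Q : nat -> Prop) :
  (forall x, Q x -> x \in L) -> (exists x, Q x) ->
  exists x, Q x /\ forall q, Q q -> f q <= f x.
Proof.
move=> HL [x0 Hx0].
have Hne : [seq x <- L | pb (Q x)] != [::].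
  apply/eqP => H; have : x0 \in [seq x <- L | pb (Q x)].
    by rewrite mem_filter HL // andbT; apply/pbP.
  by rewrite H.
have [x [Hx Hm]] := seq_max f Hne.
move: Hx; rewrite mem_filter => /andP [/pbP Qx _].
exists x; split => // q Qq; apply: Hm; rewrite mem_filter HL // andbT; exact/pbP.
Qed.

Lemma fin_min (f : nat -> nat) (L : seq nat) (Q : nat -> Prop) :
  (forall x, Q x -> x \in L) -> (exists x, Q x) ->
  exists x, Q x /\ forall q, Q q -> f x <= f q.
Proof.
move=> HL [x0 Hx0].
have Hne : [seq x <- L | pb (Q x)] != [::].
  apply/eqP => H; have : x0 \in [seq x <- L | pb (Q x)].
    by rewrite mem_filter HL // andbT; apply/pbP.
  by rewrite H.
have [x [Hx Hm]] := seq_min f Hne.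
move: Hx; rewrite mem_filter => /andP [/pbP Qx _].
exists x; split => // q Qq; apply: Hm; rewrite mem_filter HL // andbT; exact/pbP.
Qed.

Section Tree.
Variables (r : nat) (parent depth pos : nat -> nat).
Hypothesis Hd0 : depth r = 0.
Hypothesis HdS : forall v, v <> r -> depth v = (depth (parent v)).+1.
Hypothesis Hfin : forall v, exists l : seq nat, forall u, child r parent u v -> u \in l.
Hypothesis Hinj : forall u v, depth u = depth v -> pos u = pos v -> u = v.
Hypothesis Hplan : forall u v, u <> r -> v <> r -> depth u = depth v ->
          pos u < pos v -> pos (parent u) <= pos (parent v).
Hypothesis Hneat : forall v, exists u, child r parent u v.

Lemma depth0 v : depth v = 0 -> v = r.
Proof. by move=> H; case: (eqVneq v r) => // /eqP Hv; move: (HdS Hv); rewrite H. Qed.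

Lemma depth_pos_nr v : 0 < depth v -> v <> r.
Proof. by move=> H Hv; move: H; rewrite Hv Hd0. Qed.

Lemma depth_par v : 0 < depth v -> depth (parent v) = (depth v).-1.
Proof. by move=> H; rewrite (HdS (depth_pos_nr H)). Qed.

Lemma child_depth u v : child r parent u v -> depth u = (depth v).+1.
Proof. by case=> Hu <-; apply: HdS. Qed.

Lemma iter_depth k v : k <= depth v -> depth (iter k parent v) = depth v - k.
Proof.
elim: k => [|k IH] Hk; first by rewrite subn0.
rewrite iterS depth_par IH ?(ltnW Hk) //; first by lia.
by lia.
Qed.

Definition ancb (a v : nat) : bool :=
  (depth a <= depth v) && (a == iter (depth v - depth a) parent v).

Lemma ancP a v : ancestor parent depth a v <-> ancb a v.
Proof.
split.
  case=> k [Hk <-]; rewrite /ancb iter_depth // leq_subr /=.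
  by have -> : depth v - (depth v - k) = k by lia.
move=> /andP [H1 /eqP H2]; exists (depth v - depth a); split => //; lia.
Qed.

Lemma ancb_depth a v : ancb a v -> depth a <= depth v.
Proof. by case/andP. Qed.

Lemma ancb_refl v : ancb v v.
Proof. by rewrite /ancb leqnn subnn eqxx. Qed.

Lemma ancb_par a v : 0 < depth v -> ancb a (parent v) -> ancb a v.
Proof.
move=> Hv /andP [H1 /eqP H2]; rewrite depth_par // in H1 H2.
rewrite /ancb; apply/andP; split; first by lia.
have -> : depth v - depth a = (depth v).-1 - depth a + 1 by lia.
by rewrite iterD /=; apply/eqP.
Qed.

Lemma ancb_par_inv a v : ancb a v -> a <> v -> ancb a (parent v).
Proof.
move=> /andP [H1 /eqP H2] Hne.
have Hv : 0 < depth v.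
  case: (posnP (depth v)) => // H; move: H1 H2; rewrite H leqn0 => /eqP ->.
  by rewrite subnn /= => H2; case: Hne.
have Hlt : depth a < depth v.
  rewrite ltn_neqAle H1 andbT; apply/eqP => He; move: H2; rewrite He subnn /=.
  by move=> H2; case: Hne.
rewrite /ancb depth_par //; apply/andP; split; first by lia.
apply/eqP; rewrite {1}H2.
have -> : depth v - depth a = ((depth v).-1 - depth a).+1 by lia.
by rewrite iterSr.
Qed.

Lemma ancb_trans a b v : ancb a b -> ancb b v -> ancb a v.
Proof.
move=> /andP [H1 /eqP H2] /andP [H3 /eqP H4].
rewrite /ancb; apply/andP; split; first by lia.
have -> : depth v - depth a = (depth b - depth a) + (depth v - depth b) by lia.
by rewrite iterD -H4 -H2.
Qed.

Lemma ancb_same_depth a b v : ancb a v -> ancb b v -> depth a = depth b -> a = b.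
Proof. by move=> /andP [_ /eqP Ha] /andP [_ /eqP Hb] Hd; rewrite Ha Hb Hd. Qed.

(* contrapositive of planarity *)
Lemma plan_lt u w : 0 < depth u -> depth u = depth w ->
  pos (parent u) < pos (parent w) -> pos u < pos w.
Proof.
move=> Hu Hd Hp; rewrite ltnNge leq_eqVlt; apply/negP => /orP [/eqP He|Hlt].
  by move: Hp; rewrite (Hinj Hd (esym He)) ltnn.
have Hw : 0 < depth w by rewrite -Hd.
have := Hplan (depth_pos_nr Hw) (depth_pos_nr Hu) (esym Hd) Hlt.
by rewrite leqNgt Hp.
Qed.

Lemma layer_fin d : exists L : seq nat, forall v, depth v = d -> v \in L.
Proof.
elim: d => [|d [L HL]].
  by exists [:: r] => v /depth0 ->; rewrite mem_seq1.
have Hch : forall v, exists l : seq nat, forall u, child r parent u v -> u \in l by [].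
pose ch := fun v => proj1_sig (constructive_indefinite_description _ (Hch v)).
have Hchs : forall v u, child r parent u v -> u \in ch v.
  by move=> v u; exact: (proj2_sig (constructive_indefinite_description _ (Hch v))).
exists (flatten (map ch L)) => v Hv.
have Hvr : v <> r by apply: depth_pos_nr; rewrite Hv.
apply/flattenP; exists (ch (parent v)); first by apply: map_f; apply: HL; move: (HdS Hvr); lia.
by apply: Hchs.
Qed.

Lemma layers_fin D : exists L : seq nat, forall v, depth v <= D -> v \in L.
Proof.
elim: D => [|D [L HL]].
  by exists [:: r] => v; rewrite leqn0 => /eqP /depth0 ->; rewrite mem_seq1.
have [L' HL'] := layer_fin D.+1.
exists (L ++ L') => v; rewrite leq_eqVlt => /orP [/eqP H|H]; rewrite mem_cat.
  by rewrite HL' ?orbT.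
by rewrite HL.
Qed.

Lemma layer_nonempty d : exists v, depth v = d.
Proof.
elim: d => [|d [v Hv]]; first by exists r.
have [u Hu] := Hneat v; exists u; by rewrite (child_depth Hu) Hv.
Qed.

Definition Pprev y w := depth w = depth y /\ pos w < pos y /\
   forall q, depth q = depth y -> ~ (pos w < pos q /\ pos q < pos y).
Definition Pnext y w := depth w = depth y /\ pos y < pos w /\
   forall q, depth q = depth y -> ~ (pos y < pos q /\ pos q < pos w).
Definition Pleft d w := depth w = d /\ forall q, depth q = d -> pos w <= pos q.

Definition prev y := optpick (Pprev y).
Definition next y := optpick (Pnext y).
Definition leftmost d := optpick (Pleft d).

Lemma prev_some y w : prev y = Some w -> Pprev y w.
Proof. exact: optpick_some. Qed.
Lemma next_some y w : next y = Some w -> Pnext y w.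
Proof. exact: optpick_some. Qed.

Lemma prev_none y : prev y = None -> forall w, depth w = depth y -> pos y <= pos w.
Proof.
move=> Hn w Hw; rewrite leqNgt; apply/negP => Hlt.
have [L HL] := layer_fin (depth y).
have [m [[Hm1 Hm2] Hm3]] := fin_max pos (Q := fun x => depth x = depth y /\ pos x < pos y)
   (fun x Hx => HL x (proj1 Hx)) (ex_intro _ w (conj Hw Hlt)).
apply: (optpick_none Hn (x := m)); split => //; split => // q Hq [Hq1 Hq2].
by have := Hm3 q (conj Hq Hq2); rewrite leqNgt Hq1.
Qed.

Lemma next_none y : next y = None -> forall w, depth w = depth y -> pos w <= pos y.
Proof.
move=> Hn w Hw; rewrite leqNgt; apply/negP => Hlt.
have [L HL] := layer_fin (depth y).
have [m [[Hm1 Hm2] Hm3]] := fin_min pos (Q := fun x => depth x = depth y /\ pos y < pos x)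
   (fun x Hx => HL x (proj1 Hx)) (ex_intro _ w (conj Hw Hlt)).
apply: (optpick_none Hn (x := m)); split => //; split => // q Hq [Hq1 Hq2].
by have := Hm3 q (conj Hq Hq1); rewrite leqNgt Hq2.
Qed.

Lemma leftmost_ex d : exists w, leftmost d = Some w /\ Pleft d w.
Proof.
case E: (leftmost d) => [w|]; first by exists w; split => //; apply: optpick_some.
have [L HL] := layer_fin d.
have [v Hv] := layer_nonempty d.
have [m [Hm1 Hm3]] := fin_min pos (Q := fun x => depth x = d) HL (ex_intro _ v Hv).
by case: (optpick_none E (x := m)); split.
Qed.

Lemma Pprev_uniq y w1 w2 : Pprev y w1 -> Pprev y w2 -> w1 = w2.
Proof.
move=> [A1 [B1 C1]] [A2 [B2 C2]].
case: (ltngtP (pos w1) (pos w2)) => H.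
- by case: (C1 w2 A2).
- by case: (C2 w1 A1).
- by apply: Hinj => //; rewrite A1 A2.
Qed.

Lemma Pnext_uniq y w1 w2 : Pnext y w1 -> Pnext y w2 -> w1 = w2.
Proof.
move=> [A1 [B1 C1]] [A2 [B2 C2]].
case: (ltngtP (pos w1) (pos w2)) => H.
- by case: (C2 w1 A1).
- by case: (C1 w2 A2).
- by apply: Hinj => //; rewrite A1 A2.
Qed.

Lemma Pnext_prev y w : Pnext y w <-> Pprev w y.
Proof.
split.
  move=> [A [B C]]; split => //; split => // q Hq; apply: C; by rewrite Hq.
move=> [A [B C]]; split => //; split => // q Hq; apply: C; by rewrite Hq.
Qed.

Lemma prev_of_Pprev y w : Pprev y w -> prev y = Some w.
Proof.
move=> H; case E: (prev y) => [w'|].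
  by rewrite (Pprev_uniq (prev_some E) H).
move: H => [A [B _]]; have := prev_none E A; by rewrite leqNgt B.
Qed.

Lemma next_of_Pnext y w : Pnext y w -> next y = Some w.
Proof.
move=> H; case E: (next y) => [w'|].
  by rewrite (Pnext_uniq (next_some E) H).
move: H => [A [B _]]; have := next_none E A; by rewrite leqNgt B.
Qed.

Lemma next_prev y w : next y = Some w -> prev w = Some y.
Proof. by move/next_some/Pnext_prev/prev_of_Pprev. Qed.
Lemma prev_next y w : prev y = Some w -> next w = Some y.
Proof. by move/prev_some/Pnext_prev/next_of_Pnext. Qed.

Lemma leftmost_prev d w : leftmost d = Some w -> depth w = d /\ prev w = None.
Proof.
move/optpick_some => [A B]; split => //.
case E: (prev w) => [w'|] //.
move: (prev_some E) => [A' [B' _]]; move: (B w'); rewrite A' A => /(_ erefl).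
by rewrite leqNgt B'.
Qed.

Lemma prev_leftmost w : prev w = None -> leftmost (depth w) = Some w.
Proof.
move=> H; have [m [Hm [A B]]] := leftmost_ex (depth w).
rewrite Hm; congr Some; apply: Hinj => //; apply/eqP; rewrite eqn_leq B //.
by rewrite prev_none.
Qed.

Lemma prev_depth y w : prev y = Some w -> depth w = depth y.
Proof. by move/prev_some => []. Qed.
Lemma next_depth y w : next y = Some w -> depth w = depth y.
Proof. by move/next_some => []. Qed.


Variable S : seq nat.
Variable h : nat.
Hypothesis Hbb : forall v, exists p, downward_path r parent v p /\ at_most_on_path S p h.

Lemma dpath_prop v p : downward_path r parent v p ->
  forall i, child r parent (p i.+1) (p i) /\ depth (p i) = depth v + i.
Proof.
move=> [H0 H] i.
have Hc : forall j, child r parent (p j.+1) (p j).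
  move=> j; apply: (proj1 (H j)) => Hl; have [u Hu] := Hneat (p j); exact: Hl Hu.
split => //; elim: i => [|i IH]; first by rewrite H0 addn0.
by rewrite (child_depth (Hc i)) IH addnS.
Qed.

Definition Pk v k := exists p, downward_path r parent v p /\ at_most_on_path S p k.

Lemma Pk_ex v : exists k, Pk v k.
Proof. by exists h; apply: Hbb. Qed.

Definition cf v : nat := proj1_sig (constructive_indefinite_description _ (exists_minP (Pk_ex v))).

Lemma cf_spec v : Pk v (cf v) /\ forall k, Pk v k -> cf v <= k.
Proof. exact: (proj2_sig (constructive_indefinite_description _ (exists_minP (Pk_ex v)))). Qed.

Lemma cf_le_h v : cf v <= h.
Proof. by apply: (proj2 (cf_spec v)); apply: Hbb. Qed.

Lemma cf_ge v : (v \in S) <= cf v.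
Proof.
case: (boolP (v \in S)) => // HvS.
have [[p [Hp Hat]] _] := cf_spec v.
have := Hat [:: v] erefl; rewrite /=; apply => x; rewrite mem_seq1 => /eqP ->.
by split => //; exists 0; case: Hp.
Qed.

Lemma g_ex v : exists u, child r parent u v /\ cf u + (v \in S) <= cf v.
Proof.
have [[p [Hp Hat]] _] := cf_spec v.
have Hpp := dpath_prop Hp.
have [Hc1 _] := Hpp 0.
have Hp0 : p 0 = v by case: Hp.
rewrite Hp0 in Hc1.
exists (p 1); split => //.
have Hq : Pk (p 1) (cf v - (v \in S)).
  exists (fun i => p i.+1); split.
    split => // i; exact: (proj2 Hp i.+1).
  move=> l Hu Hl.
  case: (boolP (v \in S)) => HvS.
    have Hvl : v \notin l.
      apply/negP => /Hl [_ [i Hi]].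
      have [_ Hd] := Hpp i.+1; move: Hd; rewrite Hi; lia.
    have := Hat (v :: l); rewrite /= Hvl Hu /=; move=> H.
    have : (size l).+1 <= cf v.
      apply: H => // x; rewrite in_cons => /orP [/eqP ->|/Hl [Hx [i Hi]]].
        by split => //; exists 0.
      by split => //; exists i.+1.
    lia.
  rewrite subn0; apply: Hat => // x /Hl [Hx [i Hi]]; split => //; by exists i.+1.
have := (proj2 (cf_spec (p 1))) _ Hq.
have := cf_ge v; case: (v \in S) => /=; lia.
Qed.

Definition g v : nat := proj1_sig (constructive_indefinite_description _ (g_ex v)).

Lemma g_spec v : child r parent (g v) v /\ cf (g v) + (v \in S) <= cf v.
Proof. exact: (proj2_sig (constructive_indefinite_description _ (g_ex v))). Qed.

Lemma g_child v : child r parent (g v) v.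
Proof. exact: (proj1 (g_spec v)). Qed.

Lemma g_par v : parent (g v) = v.
Proof. by case: (g_child v). Qed.

Lemma g_depth v : depth (g v) = (depth v).+1.
Proof. exact: child_depth (g_child v). Qed.

Lemma g_nr v : g v <> r.
Proof. by case: (g_child v). Qed.

Lemma iter_g_depth k y : depth (iter k g y) = depth y + k.
Proof. by elim: k => [|k IH]; rewrite ?addn0 // iterS g_depth IH addnS. Qed.

Definition gp y x := (depth y <= depth x) && (x == iter (depth x - depth y) g y).

Lemma gp_iter y k : gp y (iter k g y).
Proof.
rewrite /gp iter_g_depth leq_addr /=.
by have -> : depth y + k - depth y = k by lia.
Qed.

Lemma gp_refl y : gp y y.
Proof. exact: (gp_iter y 0). Qed.

Lemma gp_ex y x : gp y x -> exists k, x = iter k g y.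
Proof. by case/andP => _ /eqP ->; eexists. Qed.

Lemma gp_step y x : gp (g y) x -> gp y x.
Proof. by move/gp_ex => [k ->]; rewrite -(iterSr k g y); apply: gp_iter. Qed.

Lemma gp_inv y x : gp y x -> x <> y -> gp (g y) x.
Proof.
move/gp_ex => [[|k] ->] //= _.
by rewrite -(iterS k g y) iterSr; apply: gp_iter.
Qed.

Lemma gp_anc y x : gp y x -> ancb y x.
Proof.
move/gp_ex => [k ->]; elim: k => [|k IH]; first exact: ancb_refl.
rewrite iterS; apply: ancb_par; first by rewrite g_depth.
by rewrite g_par.
Qed.

Lemma gp_depth y x : gp y x -> depth y <= depth x.
Proof. by case/andP. Qed.

Lemma gp_count v l : uniq l -> (forall x, x \in l -> x \in S /\ gp v x) -> size l <= cf v.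
Proof.
suff : forall n v l, uniq l -> (forall x, x \in l -> x \in S /\ gp v x) ->
     (forall x, x \in l -> depth x <= depth v + n) -> size l <= cf v.
  move=> H Hu Hl; apply: (H (\max_(x <- l) depth x)) => // x Hx.
  apply: leq_trans (leq_addl _ _); exact: leq_bigmax_seq.
elim=> [|n IH] {}v {}l Hu Hl Hd;
  pose l' := [seq x <- l | x != v];
  (have Hsz : size l <= size l' + (v \in S) by
    have := count_predC (pred1 v) l;
    rewrite /l' size_filter (count_uniq_mem _ Hu);
    case: (boolP (v \in l)) => Hvl;
    [ have [HvS _] := Hl v Hvl; rewrite HvS => <-; rewrite addnC leq_add2r;
      apply: eq_leq; apply: eq_count => x //
    | move=> <-; rewrite add0n; apply: leq_addr]);
  (suff Hl' : size l' <= cf (g v) by have := proj2 (g_spec v); lia).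
- suff -> : l' = [::] by [].
  case E: l' => [//|x l2]; have : x \in l' by rewrite E mem_head.
  rewrite mem_filter => /andP [/eqP Hne Hx].
  have [_ Hg] := Hl x Hx; have := Hd x Hx; rewrite addn0.
  move/gp_ex: (Hg) => [k Hk]; move: (gp_depth Hg) => H1 H2.
  have Hk0 : k = 0 by move: H1 H2; rewrite Hk iter_g_depth; lia.
  by case: Hne; rewrite Hk Hk0.
- apply: IH; first by rewrite filter_uniq.
    move=> x; rewrite mem_filter => /andP [/eqP Hne Hx].
    have [HxS Hg] := Hl x Hx; split => //; exact: gp_inv.
  move=> x; rewrite mem_filter => /andP [_ Hx]; rewrite g_depth.
  by have := Hd x Hx; lia.
Qed.

Definition Fset y : seq nat := [seq x <- S | gp y x].

Lemma Fset_size y : size (undup (Fset y)) <= h.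
Proof.
apply: leq_trans (cf_le_h y); apply: gp_count; first exact: undup_uniq.
by move=> x; rewrite mem_undup mem_filter => /andP [].
Qed.

Lemma Fset_self y : y \in S -> y \in Fset y.
Proof. by move=> H; rewrite mem_filter gp_refl. Qed.

Lemma Fset_g y x : x \in Fset (g y) -> x \in Fset y.
Proof. by rewrite !mem_filter => /andP [/gp_step -> ->]. Qed.


Variable adjW : nat -> nat -> Prop.
Variable t : nat.
Hypothesis Hup : forall v, exists X : seq nat,
    [/\ size X <= t,
        (forall x, x \in X -> ancestor parent depth x v) &
        (forall x y, adjW x y -> depth x <> depth y ->
            ancestor parent depth v x -> ~ ancestor parent depth v y ->
            y \in X)].
Hypothesis Hsym : forall u v, adjW u v -> adjW v u.
Hypothesis Hlayer : forall u v, depth u = depth v ->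
    (adjW u v <-> layer_consecutive depth pos u v).
Hypothesis Hanc : forall u v, adjW u v -> depth u <> depth v ->
    ancestor parent depth u v \/ ancestor parent depth v u.

Definition Xset v : seq nat :=
  [seq a <- S | (depth a < depth v) && ancb a v &&
                has (fun z => ancb v z && pb (adjW z a)) S].

Lemma Xset_size v : size (undup (Xset v)) <= t.
Proof.
have [X [HX _ HX2]] := Hup v.
apply: leq_trans HX; apply: uniq_leq_size; first exact: undup_uniq.
move=> a; rewrite mem_undup mem_filter => /andP [/andP [/andP [Hda Hav] /hasP [z Hz /andP [Hvz /pbP Hza]]] HaS].
apply: (HX2 z a Hza).
- by move: (ancb_depth Hvz); lia.
- exact/ancP.
- by move/ancP/ancb_depth; lia.
Qed.

Lemma Xset_depth v a : a \in Xset v -> depth a < depth v.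
Proof. by rewrite mem_filter => /andP [/andP [/andP []]]. Qed.

Lemma Xset_par w a : a \in Xset w ->
  a \in Fset (parent w) \/ a \in Xset (parent w).
Proof.
move=> Ha; have Hw : 0 < depth w by move: (Xset_depth Ha); lia.
move: Ha; rewrite mem_filter => /andP [/andP [/andP [Hda Hav] Hh] HaS].
have Hpw : ancb (parent w) w by apply: ancb_par => //; exact: ancb_refl.
case: (ltngtP (depth a) (depth (parent w))) => Hc.
- right; rewrite mem_filter HaS Hc andbT /=.
  have Hne : a <> w by move=> E; move: Hda; rewrite E ltnn.
  rewrite (ancb_par_inv Hav Hne) /=.
  move: Hh => /hasP [z Hz /andP [Hvz Hza]]; apply/hasP; exists z => //.
  by rewrite Hza andbT; apply: ancb_trans Hpw Hvz.
- by move: Hc Hda; rewrite depth_par //; lia.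
- left; have -> : a = parent w by apply: (ancb_same_depth Hav Hpw).
  by rewrite -(ancb_same_depth Hav Hpw Hc) Fset_self.
Qed.

Definition gap := (nat * option nat)%type.

Definition Fo (o : option nat) : seq nat := if o is Some y then Fset y else [::].
Definition Xo (o : option nat) : seq nat := if o is Some y then Xset y else [::].
Definition rside (ga : gap) : option nat :=
  match ga.2 with None => leftmost ga.1 | Some y => next y end.
Definition Fs (ga : gap) := Fo ga.2 ++ Fo (rside ga).
Definition Xs (ga : gap) := Xo ga.2 ++ Xo (rside ga).
Definition beta (ga : gap) : gap :=
  match ga with
  | (0, _) => ga
  | (d.+1, None) => (d, None)
  | (d.+1, Some y) =>
      if (y == g (parent y)) || (pos (g (parent y)) < pos y)
      then (d, Some (parent y)) else (d, prev (parent y))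
  end.
Definition gpar (ga : gap) : gap :=
  match ga.2 with
  | None => beta ga
  | Some y => if y == g (parent y) then beta ga else (ga.1, prev y)
  end.
Definition Bag (ga : gap) := Fs ga ++ Fs (beta ga) ++ Xs (beta ga).
Definition valid (ga : gap) : Prop :=
  match ga.2 with None => True | Some y => depth y = ga.1 end.

Definition side (ga : gap) (w : nat) := ga.2 = Some w \/ rside ga = Some w.

Lemma side_sub ga w : side ga w ->
  {subset Fset w <= Fs ga} /\ {subset Xset w <= Xs ga}.
Proof.
by case=> E; split => x Hx; rewrite /Fs /Xs mem_cat E /= Hx ?orbT.
Qed.

Lemma rside_depth ga w : valid ga -> rside ga = Some w -> depth w = ga.1.
Proof.
case: ga => d [y|] /= Hv.
  by move/next_depth => ->.
by move/leftmost_prev => [].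
Qed.

Lemma side_depth ga w : valid ga -> side ga w -> depth w = ga.1.
Proof.
move=> Hv [E|E]; last exact: rside_depth E.
by move: Hv; rewrite /valid E.
Qed.

Lemma rside_left y : rside (depth y, prev y) = Some y.
Proof.
rewrite /rside /=; case E: (prev y) => [w|].
  exact: prev_next.
exact: prev_leftmost.
Qed.

Lemma rside_inv ga y : valid ga -> rside ga = Some y -> ga = (depth y, prev y).
Proof.
case: ga => d [w|] /= Hv.
  move=> E; rewrite (next_prev E) (next_depth E) Hv //.
by move/leftmost_prev => [-> ->].
Qed.

Lemma depth_r_only v : depth v = 0 -> v = r.
Proof. exact: depth0. Qed.

Lemma prev_r : prev r = None.
Proof.
case E: (prev r) => [w|] //; move: (prev_some E) => [A [B _]].
by move: A; rewrite Hd0 => /depth0 Hw; move: B; rewrite Hw ltnn.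
Qed.

Lemma next_r : next r = None.
Proof.
case E: (next r) => [w|] //; move: (next_some E) => [A [B _]].
by move: A; rewrite Hd0 => /depth0 Hw; move: B; rewrite Hw ltnn.
Qed.

Lemma leftmost0 : leftmost 0 = Some r.
Proof. by have := prev_leftmost prev_r; rewrite Hd0. Qed.

Lemma par_next y y' : next y = Some y' -> 0 < depth y ->
  parent y' = parent y \/ next (parent y) = Some (parent y').
Proof.
move=> E Hy; have [A [B C]] := next_some E.
have Hy' : 0 < depth y' by rewrite A.
have Hpl := Hplan (depth_pos_nr Hy) (depth_pos_nr Hy') (esym A) B.
have Hdp : depth (parent y) = depth (parent y') by rewrite !depth_par // A.
case: (ltngtP (pos (parent y)) (pos (parent y'))) => Hc.
- right; apply: next_of_Pnext; split => //; split => // q Hq [Q1 Q2].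
  have [c Hc'] := Hneat q.
  have Hcd : depth c = depth y by rewrite (child_depth Hc') Hq depth_par //; lia.
  have Hcp : parent c = q by case: Hc'.
  have Hc0 : 0 < depth c by rewrite Hcd.
  apply: (C c Hcd); split.
    by apply: plan_lt; rewrite ?Hcp //.
  by apply: plan_lt; rewrite ?Hcp // Hcd.
- by move: Hpl; rewrite leqNgt Hc.
- by left; apply: Hinj.
Qed.

Lemma par_leftmost d w : leftmost d.+1 = Some w -> leftmost d = Some (parent w).
Proof.
move/leftmost_prev => [A B].
have Hw : 0 < depth w by rewrite A.
have Hdp : depth (parent w) = d by rewrite depth_par // A.
suff H : prev (parent w) = None by rewrite -Hdp; apply: prev_leftmost.
case E: (prev (parent w)) => [q|] //.
have [Q1 [Q2 _]] := prev_some E.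
have [c Hc] := Hneat q.
have Hcp : parent c = q by case: Hc.
have Hcd : depth c = depth w by rewrite (child_depth Hc) Q1 Hdp A.
have Hc0 : 0 < depth c by rewrite Hcd.
have := prev_none B Hcd; rewrite leqNgt.
by rewrite (plan_lt Hc0 Hcd) // Hcp.
Qed.

Lemma g_lt_prev y w : prev y = Some w -> depth y = depth (g (parent y)) ->
  pos (g (parent y)) < pos y -> pos (g (parent y)) <= pos w.
Proof.
move=> E Hd Hlt; have [A [B C]] := prev_some E.
rewrite leqNgt; apply/negP => H; apply: (C (g (parent y))) => //.
Qed.

Lemma P1 ga w : valid ga -> 0 < ga.1 -> side ga w -> side (beta ga) (parent w).
Proof.
case: ga => [[|d] o] //= Hv _.
case: o Hv => [y|] /= Hv.
- have Hy : 0 < depth y by rewrite Hv.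
  have Hdp : depth (parent y) = d by rewrite depth_par // Hv.
  case Hcond: ((y == g (parent y)) || (pos (g (parent y)) < pos y)).
  + case=> [[<-]|E]; first by left.
    case: (par_next E Hy) => [->|H]; first by left.
    by right; rewrite /rside /=.
  + have Hr : rside (d, prev (parent y)) = Some (parent y) by rewrite -Hdp rside_left.
    case=> [[<-]|E]; first by right.
    case: (par_next E Hy) => [->|H]; first by right.
    exfalso.
    have [A [B C]] := next_some E.
    have [A' [B' _]] := next_some H.
    have Hgd : depth (g (parent y)) = depth y by rewrite g_depth Hdp Hv.
    have Hne : y != g (parent y) by move: Hcond; case: (y == _).
    have Hlt : pos y < pos (g (parent y)).
      case: (ltngtP (pos y) (pos (g (parent y)))) => // Hc.
        by move: Hcond; rewrite Hc orbT.
      by move: Hne; rewrite {1}(Hinj (esym Hgd) Hc) eqxx.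
    apply: (C (g (parent y))) => //; split => //.
    apply: plan_lt; rewrite ?g_par //; first by rewrite Hgd.
    by rewrite Hgd.
- case=> [//|E] ; right; rewrite /rside /=.
  by apply: par_leftmost.
Qed.

Lemma beta_valid ga : valid ga -> valid (beta ga) /\ (beta ga).1 = ga.1.-1.
Proof.
case: ga => [[|d] o] //= Hv.
case: o Hv => [y|] //= Hv.
have Hy : 0 < depth y by rewrite Hv.
have Hdp : depth (parent y) = d by rewrite depth_par // Hv.
case: ifP => _ //=.
by rewrite /valid /=; case E: (prev (parent y)) => [q|] //=; rewrite (prev_depth E).
Qed.

Lemma P2 d y : depth y = d.+1 -> y != g (parent y) ->
  beta (d.+1, prev y) = beta (d.+1, Some y).
Proof.
move=> Hv Hne.
have Hy : 0 < depth y by rewrite Hv.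
have Hdp : depth (parent y) = d by rewrite depth_par // Hv.
have Hgd : depth (g (parent y)) = depth y by rewrite g_depth Hdp Hv.
rewrite /beta (negbTE Hne) /=.
case E: (prev y) => [w|].
- have [A [B C]] := prev_some E.
  have En := prev_next E.
  have Hw : 0 < depth w by rewrite A.
  case: (par_next En Hw) => Hpw.
  + rewrite Hpw; rewrite Hpw in Hgd Hne.
    case: (boolP (pos (g (parent w)) < pos y)) => Hgy.
    * have Hgw : pos (g (parent w)) <= pos w.
        by rewrite leqNgt; apply/negP => H; apply: (C (g (parent w))).
      move: Hgw; rewrite leq_eqVlt => /orP [/eqP Hgw|Hgw].
        have Ew : w == g (parent w) by apply/eqP; apply: Hinj; [rewrite A Hgd | rewrite Hgw].
        by rewrite Ew.
      by rewrite Hgw orbT.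
    * have Hlt : pos y < pos (g (parent w)).
        case: (ltngtP (pos y) (pos (g (parent w)))) => // Hc.
          by move: Hgy; rewrite Hc.
        by move: Hne; rewrite {1}(Hinj (esym Hgd) Hc) eqxx.
      have H1 : w != g (parent w).
        apply/eqP => Hw'; move: B; rewrite {1}Hw'; move: Hlt; lia.
      rewrite (negbTE H1) /=.
      have -> : (pos (g (parent w)) < pos w) = false.
        by apply/negbTE; rewrite -leqNgt; move: B Hlt; lia.
      by [].
  + have [A' [B' C']] := next_some Hpw.
    have Hprevp : prev (parent y) = Some (parent w) by apply: next_prev.
    have Hgy : (pos (g (parent y)) < pos y) = false.
      apply/negbTE/negP => Hgy.
      have := g_lt_prev E (esym Hgd) Hgy; rewrite leq_eqVlt => /orP [/eqP Hgw|Hgw].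
        have Hgw' : g (parent y) = w by apply: Hinj => //; rewrite Hgd A.
        by move: B'; rewrite -Hgw' g_par ltnn.
      have := Hplan (@g_nr (parent y)) (depth_pos_nr Hw) _ Hgw.
      by rewrite g_par Hgd A => /(_ erefl); rewrite leqNgt B'.
    rewrite Hgy Hprevp.
    suff -> : (w == g (parent w)) || (pos (g (parent w)) < pos w) by [].
    case: (eqVneq w (g (parent w))) => //= Hwn.
    have Hgd' : depth (g (parent w)) = depth w by rewrite g_depth depth_par // prednK.
    case: (ltngtP (pos (g (parent w))) (pos w)) => // Hc; last first.
      by move: Hwn; rewrite (Hinj Hgd' Hc) eqxx.
    exfalso.
    have [Na [Nb Nc]] := next_some En.
    case: (ltngtP (pos (g (parent w))) (pos y)) => Hc2.
    * by apply: (Nc (g (parent w))); rewrite ?Hgd' //.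
    * have := Hplan (depth_pos_nr Hy) (@g_nr (parent w)) _ Hc2.
      rewrite g_par Hgd' A => /(_ erefl); by rewrite leqNgt B'.
    * have E2 : g (parent w) = y by apply: Hinj => //; rewrite Hgd' A.
      by move: B'; rewrite -E2 g_par ltnn.
- have Hl := prev_none E.
  have -> : (pos (g (parent y)) < pos y) = false.
    by apply/negbTE; rewrite -leqNgt; apply: Hl.
  have Hlm : leftmost d.+1 = Some y by rewrite -Hv; apply: prev_leftmost.
  have := par_leftmost Hlm => /leftmost_prev [_ ->] //.
Qed.


Lemma in_Fs ga v : v \in Fs ga -> exists w, side ga w /\ v \in Fset w.
Proof.
rewrite /Fs mem_cat => /orP [] H.
  by case E: ga.2 H => [w|] //= H; exists w; split => //; left.
by case E: (rside ga) H => [w|] //= H; exists w; split => //; right.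
Qed.

Lemma in_Xs ga v : v \in Xs ga -> exists w, side ga w /\ v \in Xset w.
Proof.
rewrite /Xs mem_cat => /orP [] H.
  by case E: ga.2 H => [w|] //= H; exists w; split => //; left.
by case E: (rside ga) H => [w|] //= H; exists w; split => //; right.
Qed.

Lemma Xs_beta_sub ga : valid ga -> 0 < ga.1 -> {subset Xs (beta ga) <= Bag (beta ga)}.
Proof.
move=> Hv Hd a /in_Xs [w [Hw Ha]].
have [Hbv Hb1] := beta_valid Hv.
have Hw0 : 0 < depth w by move: (Xset_depth Ha); lia.
have Hb0 : 0 < (beta ga).1 by rewrite -(side_depth Hbv Hw).
have Hs := P1 Hbv Hb0 Hw.
have [HF HX] := side_sub Hs.
rewrite /Bag mem_cat; apply/orP; right; rewrite mem_cat.
by case: (Xset_par Ha) => H; [rewrite (HF _ H) | rewrite (HX _ H) orbT].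
Qed.

Lemma sideA ga v : valid ga -> 0 < ga.1 -> v \in Fs (beta ga) ++ Xs (beta ga) ->
  v \in Bag (gpar ga).
Proof.
move=> Hv Hd Hin.
have Hbeta : v \in Bag (beta ga).
  move: Hin; rewrite mem_cat => /orP [H|H].
    by rewrite /Bag mem_cat H.
  exact: Xs_beta_sub.
case: ga Hv Hd Hin Hbeta => [[|d] o] Hv Hd Hin Hbeta //.
case: o Hv Hd Hin Hbeta => [y|] Hv Hd Hin Hbeta; rewrite /gpar /=; last exact: Hbeta.
case: ifP => Hy; first exact: Hbeta.
have HP := P2 Hv (negbT Hy).
by rewrite /Bag HP mem_cat Hin orbT.
Qed.

Definition mini v (ga : gap) := exists s, s <> g (parent s) /\ v \in Fset s /\ ga = (depth s, prev s).

Lemma Xset_r : Xset r = [::].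
Proof.
case E: (Xset r) => [|a l] //.
have : a \in Xset r by rewrite E mem_head.
by move/Xset_depth; rewrite Hd0.
Qed.

Lemma closure ga v : valid ga -> v \in Bag ga ->
  mini v ga \/ (ga != (0, None) /\ v \in Bag (gpar ga)).
Proof.
case: ga => [[|d] o] Hv.
- have Hr : forall y, o = Some y -> y = r.
    by move=> y E; move: Hv; rewrite /valid E /=; apply: depth0.
  case: o Hv Hr => [y|] Hv Hr.
  + have Ey := Hr y erefl; subst y.
    move=> Hin; have Hin' : v \in Fset r.
      by move: Hin; rewrite /Bag /= /Fs /Xs /rside /= next_r Xset_r /= !cats0 mem_cat orbb.
    right; split => //.
    rewrite /gpar /=; have -> : (r == g (parent r)) = false.
      by apply/negbTE/eqP => E; apply: (@g_nr (parent r)).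
    by rewrite prev_r /Bag /Fs /rside /= leftmost0 /= mem_cat Hin'.
  + move=> Hin; have Hin' : v \in Fset r.
      by move: Hin; rewrite /Bag /= /Fs /Xs /rside /= leftmost0 /= Xset_r !cats0 mem_cat orbb.
    left; exists r; split; first by move=> E; apply: (@g_nr (parent r)).
    by rewrite Hd0 prev_r.
- move=> Hin.
  have Hd : 0 < (d.+1, o).1 by [].
  have Hne : (d.+1, o) != (0, None) by [].
  have Hin2 : v \in Fs (d.+1, o) ++ (Fs (beta (d.+1, o)) ++ Xs (beta (d.+1, o))) by [].
  rewrite mem_cat in Hin2; case/orP: Hin2 => [Hga|H3]; first (rewrite /Fs mem_cat in Hga; case/orP: Hga => [H1|H2]).
  + clear Hin; case: o Hv H1 Hd Hne => [y|] Hv H1 Hd Hne //=.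
    case: (boolP (y == g (parent y))) => Hyg.
    * right; split => //; apply: sideA => //.
      have Hs := P1 Hv Hd (or_introl erefl).
      have [HF _] := side_sub Hs.
      by rewrite mem_cat HF // Fset_g // -(eqP Hyg).
    * right; split => //.
      rewrite /gpar /= (negbTE Hyg) /Bag /Fs mem_cat.
      have Hvy : depth y = d.+1 by [].
      rewrite -Hvy rside_left; apply/orP; left; rewrite mem_cat; apply/orP; right; exact: H1.
  + case E: (rside (d.+1, o)) H2 => [y'|] //= H2.
    case: (boolP (y' == g (parent y'))) => Hyg.
    * right; split => //; apply: sideA => //.
      have Hs := P1 Hv Hd (or_intror E).
      have [HF _] := side_sub Hs.
      by rewrite mem_cat HF // Fset_g // -(eqP Hyg).
    * left; exists y'; split; first by move=> Ey; move: Hyg; rewrite -Ey eqxx.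
      by split => //; apply: rside_inv.
  + by right; split => //; apply: sideA.
Qed.

Lemma gp_between s1 s2 v : gp s1 v -> gp s2 v -> depth s1 <= depth s2 -> gp s1 s2.
Proof.
move=> H1 H2 Hle.
have [k Hk] := gp_ex H1.
have Hd2 := gp_depth H2.
pose j := depth s2 - depth s1.
have Hkd : depth v = depth s1 + k by rewrite Hk iter_g_depth.
have Hjk : j <= k by rewrite /j; lia.
have Hv : v = iter (k - j) g (iter j g s1) by rewrite -iterD subnK.
have Hu : ancb (iter j g s1) v by apply: gp_anc; rewrite Hv; apply: gp_iter.
have Eu : iter j g s1 = s2.
  apply: (ancb_same_depth Hu (gp_anc H2)).
  by rewrite iter_g_depth /j; lia.
by rewrite -Eu; apply: gp_iter.
Qed.

Lemma starter_gp s1 s2 : s2 <> g (parent s2) -> gp s1 s2 -> s1 = s2.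
Proof.
move=> Hs /gp_ex [[|k] Hk] //=.
by exfalso; apply: Hs; rewrite Hk iterS g_par.
Qed.

Lemma mini_uniq v a b : mini v a -> mini v b -> a = b.
Proof.
move=> [s1 [Hs1 [Hv1 ->]]] [s2 [Hs2 [Hv2 ->]]].
move: Hv1 Hv2; rewrite !mem_filter => /andP [G1 _] /andP [G2 _].
case: (leqP (depth s1) (depth s2)) => Hle.
  by rewrite (starter_gp Hs2 (gp_between G1 G2 Hle)).
by rewrite (starter_gp Hs1 (gp_between G2 G1 (ltnW Hle))).
Qed.

Lemma edge_anc u w : u \in S -> w \in S -> adjW u w -> ancb w u -> depth w < depth u ->
  exists ga, valid ga /\ ga.1 = depth u /\ u \in Bag ga /\ w \in Bag ga.
Proof.
move=> Hu Hw Huw Hwu Hlt.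
have Hu0 : 0 < depth u by lia.
exists (depth u, prev u).
have Hv : valid (depth u, prev u).
  by rewrite /valid /=; case E: (prev u) => [q|] //; rewrite (prev_depth E).
have Hr := rside_left u.
split => //; split => //; split.
  by rewrite /Bag /Fs Hr !mem_cat /= Fset_self ?orbT.
have Hs := P1 Hv Hu0 (or_intror Hr).
have [HF HX] := side_sub Hs.
rewrite /Bag mem_cat; apply/orP; right; rewrite mem_cat; apply/orP.
have Hpu : ancb (parent u) u by apply: ancb_par => //; exact: ancb_refl.
case: (ltngtP (depth w) (depth (parent u))) => Hc.
- right; apply: HX.
  rewrite mem_filter Hw Hc andbT /=.
  have Hne : w <> u by move=> E; move: Hlt; rewrite E ltnn.
  rewrite (ancb_par_inv Hwu Hne) /=.
  apply/hasP; exists u => //; rewrite Hpu /=; apply/pbP; exact: Huw.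
- by move: Hc Hlt; rewrite depth_par //; lia.
- have E : w = parent u by apply: (ancb_same_depth Hwu Hpu).
  by left; apply: HF; rewrite E Fset_self // -E.
Qed.

Lemma edge_cover x y : x \in S -> y \in S -> adjW x y ->
  exists ga, valid ga /\ (exists z, z \in S /\ ga.1 = depth z) /\ x \in Bag ga /\ y \in Bag ga.
Proof.
move=> Hx Hy Hxy.
case: (eqVneq (depth x) (depth y)) => Hd.
- have [_ [Hne Hno]] := (proj1 (Hlayer Hd)) Hxy.
  have Hpne : pos x != pos y by apply/eqP => E; apply: Hne; apply: Hinj.
  have key : forall a b, a \in S -> b \in S -> depth a = depth b -> pos a < pos b ->
      ~ (exists w, depth w = depth a /\ ((pos a < pos w < pos b) \/ (pos b < pos w < pos a))) ->
      exists ga, valid ga /\ (exists z, z \in S /\ ga.1 = depth z) /\ a \in Bag ga /\ b \in Bag ga.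
    move=> a b Ha Hb Hab Hlt Hn.
    have Hnx : next a = Some b.
      apply: next_of_Pnext; split => //; split => // q Hq [Q1 Q2].
      by apply: Hn; exists q; split => //; left; rewrite Q1 Q2.
    exists (depth a, Some a); split => //; split; first by exists a.
    by rewrite /Bag /Fs /rside /= Hnx !mem_cat /= !Fset_self ?orbT.
  case: (ltngtP (pos x) (pos y)) => Hc.
  + by apply: key.
  + have Hn' : ~ (exists w, depth w = depth y /\ ((pos y < pos w < pos x) \/ (pos x < pos w < pos y))).
      move=> [w [Hw Hw2]]; apply: Hno; exists w; split; first by rewrite Hw.
      by case: Hw2; [right|left].
    have [ga [H1 [H2 [H3 H4]]]] := key y x Hy Hx (esym Hd) Hc Hn'.
    by exists ga.
  + by move: Hpne; rewrite Hc eqxx.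
- have Hd' : depth x <> depth y by apply/eqP.
  case: (Hanc Hxy Hd') => /ancP H.
  + have Hlt : depth x < depth y by move: (ancb_depth H) Hd'; lia.
    have [ga [H1 [H2 [H3 H4]]]] := edge_anc Hy Hx (Hsym Hxy) H Hlt.
    by exists ga; split => //; split; [exists y | ].
  + have Hlt : depth y < depth x by move: (ancb_depth H) Hd'; lia.
    have [ga [H1 [H2 [H3 H4]]]] := edge_anc Hx Hy Hxy H Hlt.
    by exists ga; split => //; split; [exists x | ].
Qed.

Lemma undup_cat_size (a b : seq nat) : size (undup (a ++ b)) <= size (undup a) + size (undup b).
Proof.
rewrite -size_cat; apply: uniq_leq_size; first exact: undup_uniq.
by move=> x; rewrite mem_undup mem_cat mem_cat !mem_undup.
Qed.

Lemma Fo_size o : size (undup (Fo o)) <= h.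
Proof. by case: o => [y|] //=; apply: Fset_size. Qed.
Lemma Xo_size o : size (undup (Xo o)) <= t.
Proof. by case: o => [y|] //=; apply: Xset_size. Qed.

Lemma Bag_size ga : size (undup (Bag ga)) <= 4 * h + 2 * t.
Proof.
rewrite /Bag /Fs /Xs.
set a1 := Fo _; set a2 := Fo (rside ga); set a3 := Fo (beta ga).2;
set a4 := Fo (rside _); set a5 := Xo _; set a6 := Xo (rside _).
have := undup_cat_size (a1 ++ a2) ((a3 ++ a4) ++ (a5 ++ a6)).
have := undup_cat_size a1 a2.
have := undup_cat_size (a3 ++ a4) (a5 ++ a6).
have := undup_cat_size a3 a4.
have := undup_cat_size a5 a6.
have := Fo_size ga.2; have := Fo_size (rside ga); have := Fo_size (beta ga).2;
have := Fo_size (rside (beta ga)); have := Xo_size (beta ga).2; have := Xo_size (rside (beta ga)).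
rewrite /a1 /a2 /a3 /a4 /a5 /a6; lia.
Qed.

Lemma Bag_S ga : {subset Bag ga <= S}.
Proof.
have HF : forall o, {subset Fo o <= S} by case=> [y|] //= x; rewrite mem_filter => /andP [].
have HX : forall o, {subset Xo o <= S} by case=> [y|] //= x; rewrite mem_filter => /andP [].
have C : forall a b : seq nat, {subset a <= S} -> {subset b <= S} -> {subset a ++ b <= S}.
  by move=> a b Ha Hb z; rewrite mem_cat => /orP [/Ha|/Hb].
exact: (C _ _ (C _ _ (HF _) (HF _)) (C _ _ (C _ _ (HF _) (HF _)) (C _ _ (HX _) (HX _)))).
Qed.

Lemma gpar_shape ga : valid ga -> ga != (0, None) ->
  valid (gpar ga) /\
  ((0 < ga.1 /\ (gpar ga).1 = ga.1.-1) \/ exists y, ga.2 = Some y /\ gpar ga = (ga.1, prev y)).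
Proof.
case: ga => d [y|] Hv Hne.
- rewrite /gpar /=; case: ifP => Hyg.
  + have Hy : 0 < depth y by rewrite (eqP Hyg) g_depth.
    have [A B] := beta_valid Hv; split => //; left; split => //.
    by move: Hy; rewrite Hv.
  + split; last by right; exists y.
    by rewrite /valid /=; case E: (prev y) => [q|] //; rewrite (prev_depth E).
- case: d Hv Hne => [|d] Hv Hne //.
  by split => //; left.
Qed.


Lemma td_main : tree_decomposition adjW S (4 * h + 2 * t).
Proof.
pose DS := \max_(z <- S) depth z.
have HDS : forall z, z \in S -> depth z <= DS by move=> z Hz; apply: leq_bigmax_seq.
have [L HL] := layers_fin DS.
pose M := (\max_(y <- L) pos y).+2.
pose nodes : seq gap := undup ([seq (d, None) | d <- iota 0 DS.+1] ++
    [seq (depth y, Some y) | y <- [seq y <- L | depth y <= DS]]).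
have Hmem : forall ga : gap, ga \in nodes <-> (ga.1 <= DS /\ valid ga).
  move=> [d o]; rewrite mem_undup mem_cat; split.
    case/orP => /mapP [z Hz [-> ->]] //=.
      by move: Hz; rewrite mem_iota add0n ltnS.
    by move: Hz; rewrite mem_filter => /andP [].
  case: o => [y|] [Hd Hv]; rewrite /= in Hd Hv.
    have Hv' : depth y = d := Hv.
    apply/orP; right; rewrite -Hv'; apply: map_f.
    by rewrite mem_filter HL ?Hv' // Hd.
  by apply/orP; left; apply: map_f; rewrite mem_iota add0n ltnS.
pose part (ga : gap) := if ga.2 is Some y then (pos y).+1 else 0.
pose rk (ga : gap) := ga.1 * M + part ga.
have Hpart : forall ga : gap, ga.1 <= DS -> valid ga -> part ga < M.
  move=> [d [y|]] //= Hd Hv; rewrite /M ltnS ltnS.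
  have Hv' : depth y = d := Hv.
  by apply: leq_bigmax_seq => //; apply: HL; rewrite Hv'.
apply: (@td_abstract adjW S (4 * h + 2 * t) _ nodes (0, None) gpar rk Bag mini).
- exact: undup_uniq.
- by apply/Hmem.
- move=> ga /Hmem [Hd Hv] Hne.
  have [Hgv Hsh] := gpar_shape Hv Hne.
  case: Hsh => [[H0 H1]|[y [Ey Eg]]].
  + have Hgd : (gpar ga).1 <= DS by rewrite H1; lia.
    split; first by apply/Hmem.
    have := Hpart _ Hgd Hgv; rewrite /rk H1.
    move: H0; case: ga.1 => [|k] //= _; rewrite mulSn; lia.
  + have Hgd : (gpar ga).1 <= DS by rewrite Eg.
    split; first by apply/Hmem.
    rewrite /rk Eg /= ltn_add2l /part Ey /=.
    case E: (prev y) => [w|] //=.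
    by have [_ [B _]] := prev_some E.
- move=> [[|d] [y|]] /Hmem [Hd Hv] Hne //=; rewrite /rk /part /= ?addn0 //.
- by move=> ga x _; apply: Bag_S.
- by move=> ga _; apply: leq_trans (Bag_size ga) _.
- move=> x Hx; exists (depth x, Some x); split; first by apply/Hmem; split => //; apply: HDS.
  by rewrite /Bag /Fs !mem_cat /= Fset_self.
- move=> x y Hx Hy Hxy.
  have [ga [Hv [[z [Hz Hzd]] [H1 H2]]]] := edge_cover Hx Hy Hxy.
  exists ga; split => //; apply/Hmem; split => //; rewrite Hzd; exact: HDS.
- move=> x ga /Hmem [_ Hv] Hin; exact: closure.
- move=> x a b _ _; exact: mini_uniq.
Qed.

End Tree.

Theorem theorem1p12 (r : nat) (parent depth pos : nat -> nat)
    (adjW : nat -> nat -> Prop) (F : seq nat -> Prop) :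
  layered_wheel r parent depth pos adjW ->
  neat r parent ->
  upward_restricted r parent depth adjW ->
  bounded_branch r parent F ->
  exists c : nat, forall S, F S -> tw_le adjW S c.
Proof.
move=> [[Hd0 HdS Hfin Hinj Hplan] [[Hsym Hirr] [Hlayer Hanc _]]] Hneat [t Hup] [h Hbb].
have Hneat' : forall v, exists u, child r parent u v.
  move=> v; apply: NNPP => H; apply: (Hneat v) => u Hu; apply: H; by exists u.
exists (4 * h + 2 * t) => S HS.
exact: (@td_main r parent depth pos Hd0 HdS Hfin Hinj Hplan Hneat' S h (Hbb S HS) adjW t Hup Hsym Hlayer Hanc).
Qed.
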